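(* Let $A$ be a bounded distributive lattice, $X$ its Priestley space, and $\kappa$ a regular cardinal. Then $A$ is a $\kappa$-frame if and only if ${\sf cl}(U)$ is a clopen upset for each $\kappa$-clopen upset $U$ of $X$.
   Context: $A$ is a $\kappa$-frame if every subset of cardinality $<\kappa$ has a join and each such join $\bigvee S$ is distributive ($a\wedge\bigvee S=\bigvee\{a\wedge s:s\in S\}$ for all $a$). The Priestley space $X$ of $A$ is the set of prime filters ordered by inclusion, with topology generated by $\{\mathfrak s(a)\setminus\mathfrak s(b)\}$, $\mathfrak s(a)=\{x:a\in x\}$. ${\sf cl}$ is topological closure. A $\kappa$-clopen upset is a union of fewer than $\kappa$ clopen upsets. *)

(* Defs.v *)
From mathcomp Require Import all_boot all_order.
Set Implicit Arguments. Unset Strict Implicit. Unset Printing Implicit Defensive.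
Import Order.TTheory.
Local Open Scope order_scope.

Definition card_lt (T U : Type) : Prop :=
  (exists f : T -> U, injective f) /\ ~ (exists g : U -> T, injective g).

Definition regular_cardinal (K : Type) : Prop :=
  (exists f : nat -> K, injective f) /\
  forall (I : K -> Prop) (F : K -> K -> Prop),
    card_lt {i : K | I i} K ->
    (forall i, I i -> card_lt {x : K | F i x} K) ->
    card_lt {x : K | exists i, I i /\ F i x} K.

Section Priestley.
Context {disp : Order.disp_t} (A : tbDistrLatticeType disp).

Definition is_join (S : A -> Prop) (j : A) : Prop :=
  (forall s, S s -> s <= j) /\ (forall u, (forall s, S s -> s <= u) -> j <= u).

Definition kappa_frame (K : Type) : Prop :=
  forall S : A -> Prop, card_lt {x : A | S x} K ->
    exists j, is_join S j /\
      forall a, is_join (fun t => exists2 s, S s & t = Order.meet a s) (Order.meet a j).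

Definition prime_filter (F : A -> Prop) : Prop :=
  [/\ F \top, ~ F \bot,
      (forall a b, F a -> a <= b -> F b),
      (forall a b, F a -> F b -> F (Order.meet a b)) &
      (forall a b, F (Order.join a b) -> F a \/ F b)].

Definition pspace : Type := {F : A -> Prop | prime_filter F}.

Definition ple (x y : pspace) : Prop := forall a, proj1_sig x a -> proj1_sig y a.

Definition sA (a : A) : pspace -> Prop := fun x => proj1_sig x a.

Definition fin_basic (l : seq (A * A)) : pspace -> Prop :=
  fun x => forall p, p \in l -> sA p.1 x /\ ~ sA p.2 x.

(* open sets of the topology generated by the sets s(a) \ s(b) *)
Definition popen (U : pspace -> Prop) : Prop :=
  forall x, U x -> exists l, fin_basic l x /\ (forall y, fin_basic l y -> U y).

Definition pclosure (U : pspace -> Prop) : pspace -> Prop :=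
  fun x => forall V, popen V -> V x -> exists y, V y /\ U y.

Definition pclopen (U : pspace -> Prop) : Prop :=
  popen U /\ popen (fun x => ~ U x).

Definition pupset (U : pspace -> Prop) : Prop :=
  forall x y, ple x y -> U x -> U y.

Definition clopen_upset (U : pspace -> Prop) : Prop := pclopen U /\ pupset U.

Definition kappa_clopen_upset (K : Type) (U : pspace -> Prop) : Prop :=
  exists (I : K -> Prop) (F : K -> pspace -> Prop),
    [/\ card_lt {i : K | I i} K,
        (forall i, I i -> clopen_upset (F i)) &
        (forall x, U x <-> exists i, I i /\ F i x)].

End Priestley.

(* Main.v *)
Require Import Defs.
From mathcomp Require Import all_boot all_order.
From mathcomp Require boolp classical_sets.
Set Implicit Arguments. Unset Strict Implicit. Unset Printing Implicit Defensive.
Import Order.LTheory.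
Local Open Scope order_scope.

Section Aux.
Context {disp : Order.disp_t} (A : tbDistrLatticeType disp).
Implicit Types (a b c f j : A) (x y : pspace A).

Lemma pfP x : prime_filter (proj1_sig x). Proof. exact: proj2_sig x. Qed.

Lemma sA_top x : sA \top x. Proof. by case: (pfP x). Qed.
Lemma sA_bot x : ~ sA \bot x. Proof. by case: (pfP x). Qed.
Lemma sA_up x a b : sA a x -> a <= b -> sA b x.
Proof. by case: (pfP x) => _ _ H _ _; apply: H. Qed.
Lemma sA_meetE x a b : sA (Order.meet a b) x <-> sA a x /\ sA b x.
Proof.
case: (pfP x) => _ _ Hu Hm _; split.
  by move=> H; split; apply: (Hu _ _ H); rewrite ?leIl ?leIr.
by case=> ??; apply: Hm.
Qed.
Lemma sA_joinE x a b : sA (Order.join a b) x <-> sA a x \/ sA b x.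
Proof.
case: (pfP x) => _ _ Hu _ Hj; split; first exact: Hj.
by case=> H; apply: (Hu _ _ H); rewrite ?leUl ?leUr.
Qed.

Section GZ.
Variable Q : A -> A -> Prop.
Hypothesis Qmono : forall f j f' j', Q f j -> f <= f' -> j' <= j -> Q f' j'.
Hypothesis Qirr : forall c, ~ Q c c.
Hypothesis Qsplit : forall f j c, Q f j -> Q (Order.meet f c) j \/ Q f (Order.join j c).
Hypothesis Qtb : Q \top \bot.

Definition Good (p : (A -> Prop) * (A -> Prop)) : Prop :=
  [/\ p.1 \top, p.2 \bot,
      (forall a b, p.1 a -> p.1 b -> p.1 (Order.meet a b)),
      (forall a b, p.2 a -> p.2 b -> p.2 (Order.join a b)) &
      (forall f j, p.1 f -> p.2 j -> Q f j)].

Definition GT := {p : (A -> Prop) * (A -> Prop) | Good p}.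
Definition GR (s t : GT) : bool :=
  boolp.asbool ((forall a, (proj1_sig s).1 a -> (proj1_sig t).1 a) /\
                (forall a, (proj1_sig s).2 a -> (proj1_sig t).2 a)).

Lemma GRP s t : GR s t <-> ((forall a, (proj1_sig s).1 a -> (proj1_sig t).1 a) /\
                (forall a, (proj1_sig s).2 a -> (proj1_sig t).2 a)).
Proof. by rewrite /GR; split => [/boolp.asboolP|/boolp.asboolP]. Qed.

Lemma GZ_max : exists t : GT, forall s, GR t s -> s = t.
Proof.
apply: classical_sets.Zorn.
- by move=> t; apply/GRP.
- by move=> r s t /GRP[h1 h2] /GRP[h3 h4]; apply/GRP; split=> a Ha; auto.
- move=> [[F1 J1] g1] [[F2 J2] g2] /GRP[/= h1 h2] /GRP[/= h3 h4].
  apply: boolp.eq_exist.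
  have -> : F1 = F2 by apply: boolp.funext => a; apply: boolp.propext; split; auto.
  have -> : J1 = J2 by apply: boolp.funext => a; apply: boolp.propext; split; auto.
  by [].
- move=> C Ctot.
  have [[s0 Cs0]|nC] := boolp.pselect (exists s, C s); last first.
    have g0 : Good (fun a => a = \top, fun a => a = \bot).
      split => //=.
      + by move=> a b -> ->; rewrite meetxx.
      + by move=> a b -> ->; rewrite joinxx.
      + by move=> f j -> ->.
    by exists (exist _ _ g0) => s Cs; case: nC; exists s.
  pose F := fun a => exists2 s, C s & (proj1_sig s).1 a.
  pose J := fun a => exists2 s, C s & (proj1_sig s).2 a.
  have gU : Good (F, J).
    case: (proj2_sig s0) => h1 h2 _ _ _.
    split => /=.
    + by exists s0.
    + by exists s0.
    + move=> a b [s Cs Ha] [t Ct Hb].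
      case: (Ctot s t Cs Ct) => /GRP[H1 _].
        exists t => //; case: (proj2_sig t) => _ _ Hm _ _; exact: Hm (H1 _ Ha) Hb.
      exists s => //; case: (proj2_sig s) => _ _ Hm _ _; exact: Hm Ha (H1 _ Hb).
    + move=> a b [s Cs Ha] [t Ct Hb].
      case: (Ctot s t Cs Ct) => /GRP[_ H1].
        exists t => //; case: (proj2_sig t) => _ _ _ Hm _; exact: Hm (H1 _ Ha) Hb.
      exists s => //; case: (proj2_sig s) => _ _ _ Hm _; exact: Hm Ha (H1 _ Hb).
    + move=> f j [s Cs Ha] [t Ct Hb].
      case: (Ctot s t Cs Ct) => /GRP[H1 H2].
        case: (proj2_sig t) => _ _ _ _ Hq; exact: Hq (H1 _ Ha) Hb.
      case: (proj2_sig s) => _ _ _ _ Hq; exact: Hq Ha (H2 _ Hb).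
  exists (exist _ _ gU) => s Cs; apply/GRP; split => a Ha /=; by exists s.
Qed.

Lemma GZ : exists x : pspace A, forall f j, sA f x -> ~ sA j x -> Q f j.
Proof.
have [[[F J] gt] Hmax] := GZ_max.
have gt' := gt; case: gt' => /= Ft Jb Fm Jj FQ.
have tot : forall c, F c \/ J c.
  move=> c; apply: boolp.contrapT => Hn.
  have nF : ~ F c by move=> H; apply: Hn; left.
  have nJ : ~ J c by move=> H; apply: Hn; right.
  have [f1 [j1 [Hf1 Hj1 nQ1]]] : exists f1 j1, [/\ F f1, J j1 & ~ Q (Order.meet f1 c) j1].
    apply: boolp.contrapT => HN.
    pose F' := fun z => exists2 f, F f & Order.meet f c <= z.
    have g' : Good (F', J).
      split => //=.
      + by exists \top => //; rewrite lex1.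
      + move=> a b [f Hf Ha] [g Hg Hb]; exists (Order.meet f g); first exact: Fm.
        rewrite lexI; apply/andP; split.
          by apply: le_trans Ha; apply: leI2 => //; rewrite leIl.
        by apply: le_trans Hb; apply: leI2 => //; rewrite leIr.
      + move=> z j [f Hf Hz] Hj; apply: boolp.contrapT => nq; apply: HN.
        exists f, j; split => // q; apply: nq; exact: Qmono q Hz _.
    have eF : F' = F.
      have H : exist _ _ g' = exist _ _ gt :> GT.
        apply: Hmax; apply/GRP; split => a /= Ha //; exists a => //; exact: leIl.
      exact: (congr1 (fun s : GT => (proj1_sig s).1) H).
    have : F' c by exists \top => //; rewrite meet1x.
    by rewrite eF.
  have [f2 [j2 [Hf2 Hj2 nQ2]]] : exists f2 j2, [/\ F f2, J j2 & ~ Q f2 (Order.join j2 c)].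
    apply: boolp.contrapT => HN.
    pose J' := fun z => exists2 j, J j & z <= Order.join j c.
    have g' : Good (F, J').
      split => //=.
      + by exists \bot => //; rewrite le0x.
      + move=> a b [f Hf Ha] [g Hg Hb]; exists (Order.join f g); first exact: Jj.
        rewrite leUx; apply/andP; split.
          by apply: le_trans Ha _; apply: leU2 => //; rewrite leUl.
        by apply: le_trans Hb _; apply: leU2 => //; rewrite leUr.
      + move=> f z Hf [j Hj Hz]; apply: boolp.contrapT => nq; apply: HN.
        exists f, j; split => // q; apply: nq; exact: Qmono q _ Hz.
    have eJ : J' = J.
      have H : exist _ _ g' = exist _ _ gt :> GT.
        apply: Hmax; apply/GRP; split => a /= Ha //; exists a => //; exact: leUl.
      exact: (congr1 (fun s : GT => (proj1_sig s).2) H).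
    have : J' c by exists \bot => //; rewrite join0x.
    by rewrite eJ.
  have := FQ _ _ (Fm _ _ Hf1 Hf2) (Jj _ _ Hj1 Hj2).
  case/(Qsplit c) => q.
    apply: nQ1; apply: Qmono q _ _; last exact: leUl.
    by apply: leI2 => //; exact: leIl.
  apply: nQ2; apply: Qmono q _ _; first exact: leIr.
  by apply: leU2 => //; exact: leUr.
have nFJ : forall c, F c -> J c -> False by move=> c Fc Jc; exact: Qirr (FQ _ _ Fc Jc).
have pf : prime_filter F.
  split => //.
  - by move=> Fb; exact: nFJ Fb Jb.
  - move=> a b Fa ab; case: (tot b) => // Jb'.
    by case: (Qirr (Qmono (FQ _ _ Fa Jb') ab (lexx b))).
  - move=> a b Fab; case: (tot a) => [|Ja]; first by left.
    case: (tot b) => [|Jb']; first by right.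
    by case: (@nFJ _ Fab (Jj _ _ Ja Jb')).
exists (exist _ F pf) => f j /= Ff nFj; apply: FQ => //.
by case: (tot j).
Qed.
End GZ.


Lemma dist_split (p q c : A) : Order.meet p c <= q -> p <= Order.join q c -> p <= q.
Proof.
move=> h1 /meet_idPl h2; rewrite -h2 meetUr leUx h1 andbT; exact: leIr.
Qed.

Lemma PFT a b : ~ (a <= b) -> exists x, sA a x /\ ~ sA b x.
Proof.
move=> nab.
pose Q := fun f j => ~ (Order.meet f a <= Order.join j b).
have [x Hx] : exists x : pspace A, forall f j, sA f x -> ~ sA j x -> Q f j.
  apply: GZ.
  - move=> f j f' j' q ff' jj' H; apply: q.
    have h1 : Order.meet f a <= Order.meet f' a by apply: leI2.
    have h2 : Order.join j' b <= Order.join j b by apply: leU2.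
    exact: (le_trans h1 (le_trans H h2)).
  - by move=> c; apply; apply: (@le_trans _ _ c); [exact: leIl|exact: leUl].
  - move=> f j c q; apply: boolp.contrapT => Hn; apply: q.
    apply: (@dist_split _ _ c).
      rewrite meetAC; apply: boolp.contrapT => H; apply: Hn; by left.
    rewrite joinAC; apply: boolp.contrapT => H; apply: Hn; by right.
  - by rewrite /Q meet1x join0x.
exists x; split.
  apply: boolp.contrapT => na; apply: (Hx _ _ (sA_top x) na).
  by rewrite meet1x; exact: leUl.
move=> xb; apply: (Hx _ _ xb (@sA_bot x)).
by rewrite join0x; exact: leIl.
Qed.

Lemma le_sA a b : (forall x, sA a x -> sA b x) -> a <= b.
Proof.
move=> H; apply: boolp.contrapT => /PFT [x [ax bx]]; exact: bx (H _ ax).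
Qed.

Fixpoint mf (l : seq (A * A)) : A := if l is p :: l' then Order.meet p.1 (mf l') else \top.
Fixpoint jf (l : seq (A * A)) : A := if l is p :: l' then Order.join p.2 (jf l') else \bot.

Lemma basicE l y : fin_basic l y <-> sA (mf l) y /\ ~ sA (jf l) y.
Proof.
elim: l => [|p l IH] /=.
  by split => [_|_ p]; [split; [exact: sA_top|exact: sA_bot]|rewrite in_nil].
rewrite sA_meetE sA_joinE; split.
  move=> H; have [h1 h2] := H p (mem_head _ _).
  have [h3 h4] : sA (mf l) y /\ ~ sA (jf l) y.
    by apply/IH => q ql; apply: H; rewrite in_cons ql orbT.
  by split; [split|case].
move=> [[h1 h3] h2] q; rewrite in_cons => /orP[/eqP ->|ql].
  by split => // h; apply: h2; left.
by apply/(IH.2 _ _ ql); split => // h; apply: h2; right.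
Qed.

Lemma open_basic U x : popen U -> U x ->
  exists f j, [/\ sA f x, ~ sA j x & forall y, sA f y -> ~ sA j y -> U y].
Proof.
move=> oU Ux; have [l [lx lU]] := oU x Ux.
have [h1 h2] := (basicE l x).1 lx.
exists (mf l), (jf l); split => // y a b; apply: lU; exact/basicE.
Qed.

Lemma basic_open f j : popen (fun y => sA f y /\ ~ sA j y).
Proof.
move=> x [fx jx]; exists [:: (f, j)]; split.
  apply/basicE => /=; rewrite sA_meetE sA_joinE; split; first by split => //; exact: sA_top.
  by case => // /sA_bot.
move=> y /basicE /=; rewrite sA_meetE sA_joinE; case=> [[h1 _] h2]; split => // h; apply: h2; by left.
Qed.

Lemma open_ext (U V : pspace A -> Prop) : (forall x, U x <-> V x) -> popen U -> popen V.
Proof.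
move=> e oU x /e Vx; have [l [h1 h2]] := oU x Vx; exists l; split => // y /h2; exact: (e y).1.
Qed.

Lemma sA_open a : popen (sA a).
Proof.
apply: (@open_ext (fun y => sA a y /\ ~ sA \bot y)); last exact: basic_open.
by move=> x; split; [case|split => //; exact: sA_bot].
Qed.

Lemma sA_copen a : popen (fun y => ~ sA a y).
Proof.
apply: (@open_ext (fun y => sA \top y /\ ~ sA a y)); last exact: basic_open.
by move=> x; split; [case|split => //; exact: sA_top].
Qed.

Lemma sA_clopen_upset a : clopen_upset (sA a).
Proof.
split; first by split; [exact: sA_open|exact: sA_copen].
by move=> x y xy; exact: xy.
Qed.


Lemma CU U : clopen_upset U -> exists a, forall x, U x <-> sA a x.
Proof.
case=> [[oU cU] upU].
have st1 : forall y, ~ U y -> exists a, ~ sA a y /\ forall x, U x -> sA a x.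
  move=> y nUy; apply: boolp.contrapT => Hn.
  have Hn' : forall a, ~ sA a y -> exists x, U x /\ ~ sA a x.
    move=> a nay; apply: boolp.contrapT => H; apply: Hn; exists a; split => // x Ux.
    apply: boolp.contrapT => nax; apply: H; exists x; by split.
  pose Q := fun f j => forall i, ~ sA i y -> exists x, [/\ U x, sA f x, ~ sA j x & ~ sA i x].
  have [z Hz] : exists z, forall f j, sA f z -> ~ sA j z -> Q f j.
    apply: GZ.
    - move=> f j f' j' q ff' jj' i iy; have [x [h1 h2 h3 h4]] := q i iy; exists x; split => //.
        exact: sA_up h2 ff'.
      move=> h; apply: h3; exact: sA_up h jj'.
    - move=> c q; have [x [_ h1 h2 _]] := q \bot (@sA_bot y); exact: h2 h1.
    - move=> f j c q; apply: boolp.contrapT => Hn2.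
      have [i1 [ni1 H1]] : exists i1, ~ sA i1 y /\ forall x, U x -> sA (Order.meet f c) x -> ~ sA j x -> sA i1 x.
        apply: boolp.contrapT => Hn3; apply: Hn2; left => i iy; apply: boolp.contrapT => H4; apply: Hn3.
        exists i; split => // x Ux h1 h2; apply: boolp.contrapT => h3; apply: H4; exists x; by split.
      have [i2 [ni2 H2]] : exists i2, ~ sA i2 y /\ forall x, U x -> sA f x -> ~ sA (Order.join j c) x -> sA i2 x.
        apply: boolp.contrapT => Hn3; apply: Hn2; right => i iy; apply: boolp.contrapT => H4; apply: Hn3.
        exists i; split => // x Ux h1 h2; apply: boolp.contrapT => h3; apply: H4; exists x; by split.
      have iy : ~ sA (Order.join i1 i2) y by rewrite sA_joinE; case.
      have [x [Ux fx jx ix]] := q _ iy.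
      move: ix; rewrite sA_joinE => ix.
      have [cx|ncx] := boolp.pselect (sA c x).
        by apply: ix; left; apply: H1 => //; rewrite sA_meetE.
      by apply: ix; right; apply: H2 => //; rewrite sA_joinE; case.
    - move=> i iy; have [x [Ux ix]] := Hn' i iy; exists x; split => //; [exact: sA_top|exact: sA_bot].
  have Uz : U z.
    apply: boolp.contrapT => nUz; have [f [j [fz jz H]]] := open_basic cU nUz.
    have [x [Ux fx jx _]] := Hz f j fz jz \bot (@sA_bot y).
    exact: H x fx jx Ux.
  apply: nUy; apply: (upU z y) Uz => i iz; apply: boolp.contrapT => niy.
  have [x [_ h1 _ h2]] := Hz i \bot iz (@sA_bot z) i niy; exact: h2 h1.
apply: boolp.contrapT => Hn.
have Hn' : forall t, (forall x, U x -> sA t x) -> exists x, sA t x /\ ~ U x.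
  move=> t Ht; apply: boolp.contrapT => H; apply: Hn; exists t => x; split; first exact: Ht.
  move=> tx; apply: boolp.contrapT => nUx; apply: H; exists x; by split.
pose Q := fun f j => forall t, (forall x, U x -> sA t x) -> exists x, [/\ ~ U x, sA f x, ~ sA j x & sA t x].
have [z Hz] : exists z, forall f j, sA f z -> ~ sA j z -> Q f j.
  apply: GZ.
  - move=> f j f' j' q ff' jj' t tU; have [x [h1 h2 h3 h4]] := q t tU; exists x; split => //.
      exact: sA_up h2 ff'.
    move=> h; apply: h3; exact: sA_up h jj'.
  - move=> c q; have [x [_ h1 h2 _]] := q \top (fun x _ => sA_top x); exact: h2 h1.
  - move=> f j c q; apply: boolp.contrapT => Hn2.
    have [t1 [tU1 H1]] : exists t1, (forall x, U x -> sA t1 x) /\ forall x, ~ U x -> sA (Order.meet f c) x -> ~ sA j x -> ~ sA t1 x.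
      apply: boolp.contrapT => Hn3; apply: Hn2; left => t tU; apply: boolp.contrapT => H4; apply: Hn3.
      exists t; split => // x Ux h1 h2 h3; apply: H4; exists x; by split.
    have [t2 [tU2 H2]] : exists t2, (forall x, U x -> sA t2 x) /\ forall x, ~ U x -> sA f x -> ~ sA (Order.join j c) x -> ~ sA t2 x.
      apply: boolp.contrapT => Hn3; apply: Hn2; right => t tU; apply: boolp.contrapT => H4; apply: Hn3.
      exists t; split => // x Ux h1 h2 h3; apply: H4; exists x; by split.
    have tU : forall x, U x -> sA (Order.meet t1 t2) x.
      by move=> x Ux; rewrite sA_meetE; split; [exact: tU1|exact: tU2].
    have [x [Ux fx jx tx]] := q _ tU.
    move: tx; rewrite sA_meetE => -[tx1 tx2].
    have [cx|ncx] := boolp.pselect (sA c x).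
      by apply: (H1 x) => //; rewrite sA_meetE.
    by apply: (H2 x) => //; rewrite sA_joinE; case.
  - move=> t tU; have [x [tx Ux]] := Hn' t tU; exists x; split => //; [exact: sA_top|exact: sA_bot].
have nUz : ~ U z.
  move=> Uz; have [f [j [fz jz H]]] := open_basic oU Uz.
  have [x [Ux fx jx _]] := Hz f j fz jz \top (fun x _ => sA_top x).
  exact: Ux (H x fx jx).
have [a [az aU]] := st1 z nUz.
have [x [_ _ h1 h2]] := Hz \top a (sA_top z) az a aU; exact: h1 h2.
Qed.


Lemma sig_inj (T : Type) (P : T -> Prop) (p q : {x | P x}) : proj1_sig p = proj1_sig q -> p = q.
Proof. by case: p q => [x px] [y py] /= e; apply: boolp.eq_exist. Qed.

Lemma cl_sub (U : pspace A -> Prop) x : U x -> pclosure U x.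
Proof. by move=> Ux V _ Vx; exists x. Qed.

Lemma cl_min (U C : pspace A -> Prop) : popen (fun x => ~ C x) ->
  (forall x, U x -> C x) -> forall x, pclosure U x -> C x.
Proof.
move=> oC UC x clx; apply: boolp.contrapT => nCx.
have [y [nCy Uy]] := clx _ oC nCx; exact: nCy (UC _ Uy).
Qed.

Lemma cu_ext (U V : pspace A -> Prop) : (forall x, U x <-> V x) -> clopen_upset U -> clopen_upset V.
Proof.
move=> e; have -> // : U = V.
by apply: boolp.funext => x; apply: boolp.propext.
Qed.

End Aux.

Theorem theorem5p18 (disp : Order.disp_t) (A : tbDistrLatticeType disp) (K : Type) :
  regular_cardinal K ->
  (kappa_frame A K <->
   forall U : pspace A -> Prop, kappa_clopen_upset K U ->
     clopen_upset (pclosure U)).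
Proof.
move=> _; split.
- move=> kf U [I [F [cI cF eU]]].
  pose S := fun a : A => exists i, I i /\ forall x, F i x <-> sA a x.
  pose idx := fun s : {a | S a} => proj1_sig (boolp.cid (proj2_sig s)).
  have idxP : forall s, I (idx s) /\ forall x, F (idx s) x <-> sA (proj1_sig s) x.
    by move=> s; exact: proj2_sig (boolp.cid (proj2_sig s)).
  pose idx' := fun s => exist I (idx s) (idxP s).1.
  have idx_inj : injective idx'.
    move=> [a1 p1] [a2 p2] /(congr1 (@proj1_sig _ _)) /= e.
    have [_ h1] := idxP (exist _ a1 p1); have [_ h2] := idxP (exist _ a2 p2).
    rewrite /= e in h1.
    apply: boolp.eq_exist; apply: le_anti; apply/andP; split; apply: le_sA => x.
      by move=> /(h1 x).2 /(h2 x).1.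
    by move=> /(h2 x).2 /(h1 x).1.
  have cS : card_lt {a | S a} K.
    case: cI => [[f finj] nK]; split.
      by exists (fun s => f (idx' s)) => s1 s2 /finj /idx_inj.
    by case=> g ginj; apply: nK; exists (fun k => idx' (g k)) => k1 k2 /idx_inj /ginj.
  have [j [[ub lub] dist]] := kf S cS.
  have Sof : forall y, U y -> exists2 a, S a & sA a y.
    move=> y /eU [i [Ii Fiy]]; have [a Ha] := CU (cF i Ii).
    by exists a; [exists i|exact/(Ha y).1].
  apply: (@cu_ext _ _ (sA j)); last exact: sA_clopen_upset.
  move=> x; split; last first.
    apply: cl_min; first exact: sA_copen.
    by move=> y /Sof [a Sa ay]; apply: sA_up ay (ub _ Sa).
  move=> jx V oV Vx; apply: boolp.contrapT => nV.
  have [f [g [fx gx H]]] := open_basic oV Vx.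
  have [_ lub'] := dist f.
  have : Order.meet f j <= g.
    apply: lub' => t [s [i [Ii Fi]] ->]; apply: le_sA => y.
    rewrite sA_meetE => -[fy sy]; apply: boolp.contrapT => ng; apply: nV.
    exists y; split; first exact: H.
    by apply/eU; exists i; split => //; exact/(Fi y).2.
  move=> fjg; apply: gx; apply: sA_up fjg; exact/sA_meetE.
- move=> H S [[e einj] nK].
  pose I := fun i => exists s, e s = i.
  pose Fi := fun i y => exists s, e s = i /\ sA (proj1_sig s) y.
  pose U := fun y => exists a, S a /\ sA a y.
  have kU : kappa_clopen_upset K U.
    exists I, Fi; split.
    + split; first by exists (@proj1_sig _ _) => p1 p2; exact: sig_inj.
      case=> g ginj; apply: nK.
      pose back := fun p : {i | I i} => proj1_sig (boolp.cid (proj2_sig p)).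
      have backP : forall p, e (back p) = proj1_sig p.
        by move=> p; exact: proj2_sig (boolp.cid (proj2_sig p)).
      exists (fun k => back (g k)) => k1 k2 eb; apply: ginj.
      by apply: sig_inj; rewrite -!backP eb.
    + move=> i [s es]; apply: (@cu_ext _ _ (sA (proj1_sig s))); last exact: sA_clopen_upset.
      move=> y; split; first by move=> h; exists s.
      case=> s' [es' h]; have e' : s' = s by apply: einj; rewrite es' es.
      by rewrite -e'.
    + move=> y; split.
        by case=> a [Sa ay]; exists (e (exist _ a Sa)); split; [exists (exist _ a Sa)|exists (exist _ a Sa)].
      by case=> i [_ [s [_ h]]]; exists (proj1_sig s); split => //; exact: proj2_sig s.
  have [j ej] := CU (H U kU).
  have ub : forall s, S s -> s <= j.
    move=> s Ss; apply: le_sA => y sy; apply/(ej y).1; apply: cl_sub; by exists s.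
  exists j; split.
    split => // u Hu; apply: le_sA => y /(ej y).2; apply: cl_min; first exact: sA_copen.
    by move=> z [a [Sa az]]; apply: sA_up az (Hu _ Sa).
  move=> a; split.
    by move=> t [s Ss ->]; apply: leI2 => //; exact: ub.
  move=> u Hu; apply: le_sA => x; rewrite sA_meetE => -[ax jx].
  apply: boolp.contrapT => nux.
  have [y [[ay nuy] [s [Ss sy]]]] := (ej x).2 jx _ (basic_open (f:=a) (j:=u)) (conj ax nux).
  apply: nuy; apply: (sA_up (a := Order.meet a s)); first exact/sA_meetE.
  by apply: Hu; exists s.
Qed.
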